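(* Let $h_1,\dots,h_{n-k}$ be the generators of a valid rate-$k/n$ quantum convolutional code whose memory commutativity matrix $\Omega$ is not full rank, and fix $m$-qubit memory operators $g_{i,j}$ consistent with $\Omega$ (i.e. $g_{i,j}\odot g_{i',j'}=[\Omega]_{(i,j),(i',j')}$). Let $C$ be the set of $m$-qubit Pauli operators commuting with all $g_{i,j}$, and suppose the set $S_1$ (defined in the context) is empty. Let $M_1,\dots,M_a$ be a complete basis of $C$ (with $a\le k$). Add to the encoding transformation the rows $$I^{\otimes m}\otimes I^{\otimes(n-k)}\otimes X_t\ \longrightarrow\ I^{\otimes n}\otimes M_t,\qquad t=1,\dots,a,$$ where $X_t$ is the Pauli $X$ on the $t$-th information qubit. Then every Clifford encoder implementing the encoding transformation together with these added rows is non-catastrophic.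
   Context: Pauli operators are considered up to phase; $A\odot B\in\{0,1\}$ is $1$ iff $A,B$ anticommute, additive mod 2 over tensor factors. The weight of a Pauli operator is its number of non-identity tensor factors. A rate-$k/n$ quantum convolutional code is given by $n-k$ generators $h_i=(h_{i,1}|\cdots|h_{i,l_i})$ of $n$-qubit Pauli operators (frames of $n$ qubits) and all their frame shifts; it is valid if all these pairwise commute, i.e. $\sum_r h_{i,r+t}\odot h_{i',r}=0$ for all $i,i',t$ (with $h_{i,j}=I^{\otimes n}$ outside $1\le j\le l_i$). Encoding transformation: a Clifford unitary $U$ acting on $m$ memory, $n-k$ ancilla and $k$ information qubits and outputting $n$ physical and $m$ memory qubits implements it if, for each $1\le i\le n-k$ and $0\le j\le l_i-1$, $U$ maps $g_{i,j}\otimes A_{i,j}\otimes I^{\otimes k}$ to $h_{i,j+1}\otimes g_{i,j+1}$ (up to phase), where $g_{i,0}=g_{i,l_i}=I^{\otimes m}$, $A_{i,0}=Z_i$ (Pauli $Z$ on the $i$-th ancilla), $A_{i,j}=I^{\otimes(n-k)}$ for $j\ge1$, and $g_{i,j}$ ($1\le j\le l_i-1$) are $m$-qubit Pauli operators. Each such requirement is a ''row'' (input $\to$ output); products of rows (multiplying inputs together and outputs together) are also input–output relations of $U$. Memory commutativity matrix $\Omega$: the symmetric binary matrix indexed by $(i,j)$, $1\le i\le n-k$, $1\le j\le l_i-1$, with entries $g_{i,j}\odot g_{i',j'}$, forced by consistency of commutation relations (for $j\ge j'$ they equal $\sum_{r\ge1}h_{i,j+r}\odot h_{i',j'+r}$);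 rank is over $\mathbb{F}_2$. $C$ is a group (modulo phases, an $\mathbb{F}_2$-vector space); a complete basis of $C$ is an independent generating set of it. $S_1$ is the set of nontrivial rows or products of rows of the encoding transformation of the form $M\otimes S^z\otimes L\to I^{\otimes n}\otimes M'$ with $M,M'\in C$, $S^z\in\{I,Z\}^{\otimes(n-k)}$ and $L$ an arbitrary $k$-qubit Pauli operator. State diagram of $U$: vertices are $m$-qubit Pauli operators; an edge $M\to M'$ labeled $(L,P)$ exists whenever $U$ maps $M\otimes S^z\otimes L$ to $P\otimes M'$ for some $S^z\in\{I,Z\}^{\otimes(n-k)}$, $k$-qubit Pauli $L$, $n$-qubit Pauli $P$. Physical (logical) weight of an edge is the weight of $P$ (of $L$). $U$ is catastrophic if there is a cycle in the state diagram all of whose edges have zero physical weight and at least one of whose edges has nonzero logical weight; otherwise non-catastrophic. *)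

(* Defs.v *)
From HB Require Import structures.
From mathcomp Require Import all_boot all_order all_algebra.
Set Implicit Arguments. Unset Strict Implicit. Unset Printing Implicit Defensive.
Import GRing.Theory.
Local Open Scope ring_scope.

(* n-qubit Pauli operator modulo phase: per qubit (x,z) in F_2^2.
   (0,0)=I, (1,0)=X, (0,1)=Z, (1,1)=Y.  0 is the identity operator,
   + is the product (modulo phases). *)
Definition Pauli (q : nat) := {ffun 'I_q -> 'F_2 * 'F_2}.

(* A (.) B : 1 iff A and B anticommute. *)
Definition sp (q : nat) (A B : Pauli q) : 'F_2 :=
  \sum_(i < q) ((A i).1 * (B i).2 + (A i).2 * (B i).1).

Definition weight (q : nat) (A : Pauli q) : nat := #|[set i | A i != 0]|.

Definition tens (a b : nat) (A : Pauli a) (B : Pauli b) : Pauli (a + b) :=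
  [ffun i => match split i with inl j => A j | inr j => B j end].

(* single-qubit Paulis Z_t, X_t on qubit t (t counted from 0) *)
Definition PZ (q : nat) (t : nat) : Pauli q :=
  [ffun i : 'I_q => if val i == t then (0, 1) else (0, 0)].
Definition PX (q : nat) (t : nat) : Pauli q :=
  [ffun i : 'I_q => if val i == t then (1, 0) else (0, 0)].

Definition Ztype (q : nat) (S : Pauli q) : bool := [forall i, (S i).1 == 0].

(* Clifford unitary modulo phases, from an N-qubit input register to an
   N'-qubit output register: its conjugation action on Paulis is an
   additive bijection preserving the symplectic form. *)
Definition clifford (N N' : nat) (U : Pauli N -> Pauli N') : Prop :=
  [/\ forall A B, U (A + B) = U A + U B,
      bijective U &
      forall A B, sp (U A) (U B) = sp A B].

Section Code.
Variables (n k : nat).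
(* generators h i j = h_{i+1,j}, with lengths l i = l_{i+1};
   hf forces h_{i,j} = I outside 1 <= j <= l_i *)
Variables (l : 'I_(n - k) -> nat) (h : 'I_(n - k) -> nat -> Pauli n).

Definition hf (i : 'I_(n - k)) (j : nat) : Pauli n :=
  if ((0 < j) && (j <= l i))%N then h i j else 0.

(* validity: all generators and their frame shifts commute *)
Definition valid_code : Prop :=
  forall (i i' : 'I_(n - k)) (t : nat),
    \sum_(r < (l i').+1) sp (hf i (r + t)) (hf i' r) = 0.

Definition Omega (i : 'I_(n - k)) (j : nat) (i' : 'I_(n - k)) (j' : nat) : 'F_2 :=
  if (j' <= j)%N
  then \sum_(1 <= r < (l i + l i').+1) sp (hf i (j + r)) (hf i' (j' + r))
  else \sum_(1 <= r < (l i + l i').+1) sp (hf i' (j' + r)) (hf i (j + r)).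

Definition OIdx :=
  {p : 'I_(n - k) * 'I_(\max_(i < n - k) l i) | (0 < p.2)%N && (p.2 < l p.1)%N}.

Definition Omega_mx : 'M['F_2]_(#|{: OIdx}|) :=
  \matrix_(a, b) let p := enum_val a in let q := enum_val b in
     Omega (val p).1 (val (val p).2) (val q).1 (val (val q).2).

Variable m : nat.
(* memory operators g i j = g_{i+1,j}; gf forces g_{i,0} = g_{i,l_i} = I
   (and I outside the range) *)
Variable g : 'I_(n - k) -> nat -> Pauli m.

Definition gf (i : 'I_(n - k)) (j : nat) : Pauli m :=
  if ((0 < j) && (j < l i))%N then g i j else 0.

Definition consistent_with_Omega : Prop :=
  forall (i i' : 'I_(n - k)) (j j' : nat),
    (0 < j < l i)%N -> (0 < j' < l i')%N ->
    sp (g i j) (g i' j') = Omega i j i' j'.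

Definition inC (M : Pauli m) : Prop :=
  forall (i : 'I_(n - k)) (j : nat), (0 < j < l i)%N -> sp M (g i j) = 0.

Definition Aanc (i : 'I_(n - k)) (j : nat) : Pauli (n - k) :=
  if j == 0%N then PZ (n - k) i else 0.

(* rows of the encoding transformation: for 0 <= j <= l_i - 1,
   g_{i,j} (x) A_{i,j} (x) I^k  -->  h_{i,j+1} (x) g_{i,j+1} *)
Definition row_in (i : 'I_(n - k)) (j : nat) : Pauli (m + (n - k) + k) :=
  tens (tens (gf i j) (Aanc i j)) 0.
Definition row_out (i : 'I_(n - k)) (j : nat) : Pauli (n + m) :=
  tens (hf i j.+1) (gf i j.+1).

Definition prod_in (c : 'I_(n - k) -> nat -> bool) : Pauli (m + (n - k) + k) :=
  \sum_(i < n - k) \sum_(j < l i | c i j) row_in i j.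
Definition prod_out (c : 'I_(n - k) -> nat -> bool) : Pauli (n + m) :=
  \sum_(i < n - k) \sum_(j < l i | c i j) row_out i j.

Definition inS1 (P : Pauli (m + (n - k) + k)) (Q : Pauli (n + m)) : Prop :=
  (exists c, P = prod_in c /\ Q = prod_out c) /\
  (P != 0 \/ Q != 0) /\
  exists (M : Pauli m) (S : Pauli (n - k)) (L : Pauli k) (M' : Pauli m),
    [/\ inC M, Ztype S, inC M',
        P = tens (tens M S) L & Q = tens 0 M'].

Definition S1_empty : Prop := forall P Q, ~ inS1 P Q.

Definition implements (U : Pauli (m + (n - k) + k) -> Pauli (n + m)) : Prop :=
  forall (i : 'I_(n - k)) (j : nat), (j < l i)%N -> U (row_in i j) = row_out i j.

End Code.

(* catastrophic: a closed walk in the state diagram, all of whose edges have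
   zero physical weight and at least one of which has nonzero logical weight *)
Definition catastrophic (n k m : nat)
    (U : Pauli (m + (n - k) + k) -> Pauli (n + m)) : Prop :=
  exists (N : nat) (s : nat -> Pauli m) (S : nat -> Pauli (n - k))
         (L : nat -> Pauli k) (P : nat -> Pauli n),
    [/\ (0 < N)%N, s N = s 0%N,
        forall t, (t < N)%N -> Ztype (S t) /\
          U (tens (tens (s t) (S t)) (L t)) = tens (P t) (s t.+1),
        forall t, (t < N)%N -> weight (P t) = 0%N &
        exists2 t, (t < N)%N & weight (L t) != 0%N].

Definition complete_basis_C (n k m : nat) (l : 'I_(n - k) -> nat)
    (g : 'I_(n - k) -> nat -> Pauli m) (a : nat) (M : 'I_a -> Pauli m) : Prop :=
  (forall t, inC l g (M t)) /\
  (forall P, inC l g P -> exists c : 'I_a -> bool, P = \sum_(t < a | c t) M t) /\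
  (forall c : 'I_a -> bool, \sum_(t < a | c t) M t = 0 -> forall t, c t = false).

(* Main.v *)
Require Import Defs.
From HB Require Import structures.
From mathcomp Require Import all_boot all_order all_algebra.
Import GRing.Theory.
Local Open Scope ring_scope.

Lemma paddE q (A B : Pauli q) i : (A + B) i = A i + B i.
Proof. by rewrite ffunE. Qed.
Lemma p0E q i : (0 : Pauli q) i = 0.
Proof. by rewrite ffunE. Qed.
Lemma tensL a b (A : Pauli a) (B : Pauli b) i : tens A B (lshift b i) = A i.
Proof. by rewrite /tens ffunE (unsplitK (inl i)). Qed.
Lemma tensR a b (A : Pauli a) (B : Pauli b) i : tens A B (rshift a i) = B i.
Proof. by rewrite /tens ffunE (unsplitK (inr i)). Qed.

Lemma tens_eq a b (A C : Pauli a) (B D : Pauli b) :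
  tens A B = tens C D -> A = C /\ B = D.
Proof.
move/ffunP=> H; split; apply/ffunP => i.
  by have := H (lshift b i); rewrite !tensL.
by have := H (rshift a i); rewrite !tensR.
Qed.

Lemma tensD a b (A C : Pauli a) (B D : Pauli b) :
  tens A B + tens C D = tens (A + C) (B + D).
Proof.
apply/ffunP => i; rewrite paddE /tens !ffunE.
by case: split => j; rewrite paddE.
Qed.

Lemma tens00 a b : tens (0 : Pauli a) (0 : Pauli b) = 0.
Proof. by apply/ffunP => i; rewrite /tens !ffunE; case: split => j; rewrite p0E. Qed.

Lemma sp_tens a b (A C : Pauli a) (B D : Pauli b) :
  sp (tens A B) (tens C D) = sp A C + sp B D.
Proof.
rewrite /sp big_split_ord; congr (_ + _); apply: eq_bigr => i _.
  by rewrite !tensL.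
by rewrite !tensR.
Qed.

Lemma sp_0r q (A : Pauli q) : sp A 0 = 0.
Proof. by rewrite /sp big1 // => i _; rewrite p0E /= !mulr0 addr0. Qed.
Lemma sp_0l q (A : Pauli q) : sp 0 A = 0.
Proof. by rewrite /sp big1 // => i _; rewrite p0E /= !mul0r addr0. Qed.

Lemma sp_Z q (S T : Pauli q) : Ztype S -> Ztype T -> sp S T = 0.
Proof.
move=> /forallP HS /forallP HT; rewrite /sp big1 // => i _.
by rewrite (eqP (HS i)) (eqP (HT i)) mul0r mulr0 addr0.
Qed.

Lemma Z_Aanc n k i j : Ztype (@Aanc n k i j).
Proof.
rewrite /Aanc; case: eqP => _; apply/forallP => x; rewrite ffunE //.
by case: ifP.
Qed.

Theorem theorem4 (n k : nat) (l : 'I_(n - k) -> nat)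
    (h : 'I_(n - k) -> nat -> Pauli n) (m : nat)
    (g : 'I_(n - k) -> nat -> Pauli m) (a : nat) (M : 'I_a -> Pauli m) :
  valid_code l h ->
  (\rank (Omega_mx l h) < #|{: OIdx l}|)%N ->
  consistent_with_Omega l h g ->
  S1_empty l h g ->
  complete_basis_C l g M ->
  (k <= n)%N ->
  (a <= k)%N ->
  forall U : Pauli (m + (n - k) + k) -> Pauli (n + m),
    clifford U ->
    implements l h g U ->
    (forall t : 'I_a, U (tens (tens 0 0) (PX k t)) = tens 0 (M t)) ->
    ~ catastrophic U.
Proof.
move=> _ _ _ _ [MC [Mspan Mind]] _ _ U [Uadd [V UV VU] Usp] Uimp UX.
move=> [N [s [S [L [P [N0 sN Hedge HP [t0 t0N Lt0]]]]]]].
have U0 : U 0 = 0.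
  have H := Uadd 0 0; rewrite addr0 in H.
  by apply: (addrI (U 0)); rewrite addr0 -H.
have Uinj : injective U := can_inj UV.
have Pz : forall t, (t < N)%N -> P t = 0.
  move=> t Ht; have /eqP := HP t Ht; rewrite /weight cards_eq0 => /eqP E.
  apply/ffunP => i; rewrite p0E; apply/eqP/negP => /negP Hi.
  have : i \in [set i | P t i != 0] by rewrite inE.
  by rewrite E inE.
have claim : forall i j t, (t <= N)%N -> sp (s t) (gf l g i j) = 0.
  move=> i j; elim: j => [|j IH] t Ht.
    by rewrite /gf ltnn /= sp_0r.
  have step : forall t', (t' < N)%N -> sp (s t'.+1) (gf l g i j.+1) = 0.
    move=> t' Ht'.
    case: (ltnP j (l i)) => Hj; last first.
      rewrite /gf; case: ifP => [/andP [_ H]|_]; last by rewrite sp_0r.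
      by rewrite ltnNge (leq_trans Hj (leqnSn j)) in H.
    have E := Usp (tens (tens (s t') (S t')) (L t')) (row_in l g i j).
    have [HZ HU] := Hedge t' Ht'.
    rewrite HU Uimp // /row_in /row_out !sp_tens Pz // sp_0l sp_0r add0r in E.
    by rewrite E IH ?(ltnW Ht') // sp_Z ?Z_Aanc // !addr0.

  case: t Ht => [|t] Ht.
    by rewrite -sN; have := step N.-1; rewrite prednK //; apply.
  exact: step.
have sC : forall t, (t < N)%N -> inC l g (s t.+1).
  move=> t Ht i j Hj; have := claim i j t.+1 Ht.
  by rewrite /gf Hj.
have s0 : forall t, (t < N)%N -> s t = 0.
  move=> t Ht; have [c Hc] := Mspan _ (sC t Ht).
  have [z Hz] : exists z, U (tens (tens 0 0) z) = tens 0 (s t.+1).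
    rewrite Hc; apply: (big_ind (fun y => exists z, U (tens (tens 0 0) z) = tens 0 y)).
    - by exists 0; rewrite !tens00 U0.
    - move=> y1 y2 [z1 H1] [z2 H2]; exists (z1 + z2).
      have -> : tens (tens (0 : Pauli m) (0 : Pauli (n - k))) (z1 + z2) =
        tens (tens 0 0) z1 + tens (tens 0 0) z2 by rewrite !tensD !addr0.
      by rewrite Uadd H1 H2 tensD add0r.
    - by move=> x _; exists (PX k x); rewrite UX.
  have [_ HU] := Hedge t Ht; rewrite Pz // -Hz in HU.
  by have /tens_eq [/tens_eq [E _] _] := Uinj _ _ HU.
have sN0 : forall t, (t <= N)%N -> s t = 0.
  move=> t; rewrite leq_eqVlt => /orP [/eqP ->|]; last exact: s0.
  by rewrite sN; apply: s0.
have [_ HU] := Hedge t0 t0N.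
rewrite s0 // sN0 // Pz // tens00 -U0 in HU.
have := Uinj _ _ HU; rewrite -(tens00 (m + (n - k)) k) => /tens_eq [_ HL].
move: Lt0; rewrite HL /weight cards_eq0; apply/negP/negPn/eqP/setP => i.
by rewrite !inE p0E eqxx.
Qed.
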